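(* Let $0 \le \tilde{p} \leq p \le 1$. Consider $\mathrm{USD}_p$ in configuration $\mathbf{x}(t)$ and $\mathrm{USD}_{\tilde{p}}$ in configuration $\tilde{\mathbf{x}}(t)$ with $\mathbf{x}(t) \succeq_C \tilde{\mathbf{x}}(t)$. Then there exists a bijection $b: [n]^2\times(0,1] \to [n]^2\times(0,1]$ between the random choices of the two schedulers such that, if $\mathrm{USD}_p$ performs its interaction with random choice $\omega$ and $\mathrm{USD}_{\tilde{p}}$ with random choice $b(\omega)$, then $\mathbf{x}(t+1) \succeq_C \tilde{\mathbf{x}}(t+1)$.
   Context: Population protocol with $n$ agents labeled $1,\dots,n$, each in a state from $Q=\{1,2,\bot\}$ (Opinion 1, Opinion 2, undecided). In each interaction the scheduler draws $(i,j,r) \in [n]^2\times(0,1]$ uniformly at random: $i$ is the initiator, $j$ the responder, and only the initiator changes state. In $\mathrm{USD}_p$: if the initiator is $2$ and the responder $1$, the initiator becomes $\bot$; if the initiator is $1$ and the responder $2$, the initiator stays $1$ if $r\le p$ and becomes $\bot$ otherwise; if the initiator is $\bot$, it adopts the responder's state; otherwise nothing changes. A configuration $(x_1,x_2,u)$ counts the agents in states $1,2,\bot$. The states are ordered by $1 \succeq_Q \bot \succeq_Q 2$, and for configurations $\mathbf{x}=(x_1,x_2,u)$, $\tilde{\mathbf{x}}=(\tilde{x}_1,\tilde{x}_2,\tilde{u})$ we write $\mathbf{x}\succeq_C\tilde{\mathbf{x}}$ if $x_1\ge\tilde{x}_1$ and $x_1+u\ge\tilde{x}_1+\tilde{u}$.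 At time $t$ the agents in each process are labeled so that their states are sorted: $q_i(t)\succeq_Q q_{i+1}(t)$ and $\tilde{q}_i(t)\succeq_Q\tilde{q}_{i+1}(t)$ for all $i\in[n-1]$. *)

(* Defs.v *)
From mathcomp Require Import all_boot all_order all_algebra.
From mathcomp Require Import reals.
Set Implicit Arguments. Unset Strict Implicit. Unset Printing Implicit Defensive.
Import Order.TTheory GRing.Theory Num.Theory.
Local Open Scope ring_scope.

Inductive Q := One | Two | Und.

Definition qrank (a : Q) : nat := match a with One => 2 | Und => 1 | Two => 0 end.
Definition qge (a b : Q) : bool := (qrank b <= qrank a)%N.

(* Agents are labeled by 'I_n (0-based version of 1..n). *)
Definition sorted_states (n : nat) (q : 'I_n -> Q) : Prop :=
  forall i j : 'I_n, (i <= j)%N -> qge (q i) (q j).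

Definition is_one (a : Q) : bool := if a is One then true else false.
Definition is_two (a : Q) : bool := if a is Two then true else false.
Definition is_und (a : Q) : bool := if a is Und then true else false.

Definition config (n : nat) (q : 'I_n -> Q) : nat * nat * nat :=
  (#|[pred i | is_one (q i)]|, #|[pred i | is_two (q i)]|, #|[pred i | is_und (q i)]|).

Definition confge (x xt : nat * nat * nat) : Prop :=
  let: (x1, _, u) := x in let: (y1, _, v) := xt in
  (y1 <= x1)%N /\ (y1 + v <= x1 + u)%N.

Definition Omega (R : realType) (n : nat) : Type :=
  ('I_n * 'I_n * {r : R | (0 < r) && (r <= 1)})%type.

(* New state of the initiator in USD_p, given initiator state a, responder state b. *)
Definition usd_new (R : realType) (p r : R) (a b : Q) : Q :=
  match a, b with
  | Two, One => Und
  | One, Two => if r <= p then One else Und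
  | Und, s => s
  | s, _ => s
  end.

Definition usd_step (R : realType) (n : nat) (p : R) (q : 'I_n -> Q)
    (w : Omega R n) : 'I_n -> Q :=
  let: (i, j, r) := w in
  fun k => if k == i then usd_new p (sval r) (q i) (q j) else q k.

(* Main.v *)
Require Import Defs.
From mathcomp Require Import all_boot all_order all_algebra.
From mathcomp Require Import reals.
Import Order.TTheory GRing.Theory Num.Theory.
Local Open Scope ring_scope.
Set Implicit Arguments. Unset Strict Implicit.

Lemma down_card n (P : pred 'I_n)
  (hP : forall i j : 'I_n, (j <= i)%N -> P i -> P j) (i : 'I_n) :
  P i = (i < #|P|)%N.
Proof.
case Pi: (P i); apply/esym.
- have H : #|[set widen_ord (ltn_ord i) y | y : 'I_i.+1]| = i.+1.
    by rewrite card_imset ?card_ord //; by move=> x y /(congr1 val) /= /val_inj.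
  rewrite -H; apply: subset_leq_card; apply/subsetP => x /imsetP [y _ ->].
  by apply: hP Pi; rewrite /= -ltnS ltn_ord.
- apply/negbTE; rewrite -leqNgt.
  have Hi : (i <= n)%N by apply: ltnW.
  have H : #|[set: 'I_i]| = i by rewrite cardsT card_ord.
  apply: (leq_trans _ (leq_trans (leq_imset_card (widen_ord Hi) [set: 'I_i]) (eq_leq H))).
  apply: subset_leq_card; apply/subsetP => x Px.
  have xi : (x < i)%N.
    by rewrite ltnNge; apply/negP => hx; move: (hP _ _ hx Px); rewrite Pi.
  by apply/imsetP; exists (Ordinal xi) => //; apply: val_inj.
Qed.

Definition Pr n (q : 'I_n -> Q) m := [pred i | (m <= qrank (q i))%N].

Lemma cfg1 n (q : 'I_n -> Q) : #|[pred i | is_one (q i)]| = #|Pr q 2|.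
Proof. by apply: eq_card => i; rewrite !inE; case: (q i). Qed.

Lemma cfg2 n (q : 'I_n -> Q) :
  (#|[pred i | is_one (q i)]| + #|[pred i | is_und (q i)]|)%N = #|Pr q 1|.
Proof.
rewrite -cardUI.
have -> : #|predI [pred i | is_one (q i)] [pred i | is_und (q i)]| = 0%N.
  by apply: eq_card0 => i; rewrite !inE; case: (q i).
by rewrite addn0; apply: eq_card => i; rewrite !inE; case: (q i).
Qed.

Lemma Pr_down n (q : 'I_n -> Q) m : sorted_states q ->
  forall i j : 'I_n, (j <= i)%N -> Pr q m i -> Pr q m j.
Proof. move=> hq i j hji; rewrite !inE => h; exact: leq_trans h (hq _ _ hji). Qed.

Definition dom n (q qt : 'I_n -> Q) := forall k, (qrank (qt k) <= qrank (q k))%N.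

Lemma dom_conf n (q qt : 'I_n -> Q) : dom q qt -> confge (config q) (config qt).
Proof.
move=> d; rewrite /config /confge !cfg2 !cfg1.
split; apply: subset_leq_card; apply/subsetP => k; rewrite !inE => h;
  exact: leq_trans h (d k).
Qed.

Lemma conf_dom n (q qt : 'I_n -> Q) : sorted_states q -> sorted_states qt ->
  confge (config q) (config qt) -> dom q qt.
Proof.
move=> hq hqt; rewrite /config /confge !cfg2 !cfg1 => -[h2 h1] k.
case E: (qt k) => /=.
- have : Pr qt 2 k by rewrite inE E.
  rewrite (down_card (Pr_down (m:=2%N) hqt)) => hk.
  have : Pr q 2 k by rewrite (down_card (Pr_down (m:=2%N) hq)); exact: leq_trans hk h2.
  by rewrite inE.
- by [].
- have : Pr qt 1 k by rewrite inE E.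
  rewrite (down_card (Pr_down (m:=1%N) hqt)) => hk.
  have : Pr q 1 k by rewrite (down_card (Pr_down (m:=1%N) hq)); exact: leq_trans hk h1.
  by rewrite inE.
Qed.

Lemma new_mono (R : realType) (p pt r : R) a b a2 b2 : pt <= p ->
  (qrank a2 <= qrank a)%N -> (qrank b2 <= qrank b)%N ->
  (qrank (usd_new pt r a2 b2) <= qrank (usd_new p r a b))%N.
Proof.
move=> hp; case: a; case: a2 => //; case: b; case: b2 => //= _ _;
  repeat case: ifP => //; move=> h1 h2; first [by rewrite (le_trans h1 hp) in h2 | by rewrite (le_trans h2 hp) in h1].
Qed.

Theorem lemma5 (R : realType) (n : nat) (p pt : R)
    (hpt0 : 0 <= pt) (hptp : pt <= p) (hp1 : p <= 1)
    (q qt : 'I_n -> Q)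
    (hq : sorted_states q) (hqt : sorted_states qt)
    (hdom : confge (config q) (config qt)) :
  exists b : Omega R n -> Omega R n,
    bijective b /\
    forall w : Omega R n,
      confge (config (usd_step p q w)) (config (usd_step pt qt (b w))).
Proof.
exists id; split; first by exists id.
have d := conf_dom hq hqt hdom.
move=> [[i j] r]; apply: dom_conf => k /=.
by case: ifP => _; [apply: new_mono | ].
Qed.
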